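(* In the setting and notation described in the context, suppose that $\Delta_{2,n},\Delta_{p_0+1,n},\Delta_{p_0+M-1,n},\Delta_{p_0,n}$ are each $O(n^{-\gamma_0})$, $\eta_n=O(n^{-\gamma_1})$, $V_{1n}=O(n^{\gamma_2})$, $V_{2n}=O(n^{\gamma_3})$, $C_{1n}=O(n^{\gamma_4})$, $C_{2n}=O(n^{\gamma_5})$, $C_{3n}=O(n^{\gamma_6})$, $C_{4n}=O(n^{\gamma_7})$, $p_0=O(n^{\gamma_8})$, $M=O(n^{\gamma_9})$, where $\gamma_1,\gamma_8,\gamma_9>0$, $\gamma_8<\gamma_9$, $3\gamma_9<\gamma_0$, $\gamma_9<2\gamma_1$, $\gamma_7<\gamma_1$, $\gamma_6<\gamma_1$, $\gamma_2<\gamma_0$, $\gamma_3<\gamma_0$, $3\gamma_9+\gamma_4<\gamma_0$, $3\gamma_9<\gamma_1$, $6\gamma_9+\gamma_5<\gamma_0$, $3\gamma_8+\gamma_4+\gamma_6<\gamma_0$, $3\gamma_8+\gamma_6<\gamma_1$, $6\gamma_8+\gamma_5+\gamma_6<\gamma_0$, $3\gamma_9+\gamma_4+\gamma_7<\gamma_0$, $3\gamma_9+\gamma_7<\gamma_1$, $6\gamma_9+\gamma_5+\gamma_7<\gamma_0$. Then there exist constants $\alpha\in(0,1)$ and $D>0$ such that, for all sufficiently large $n$, (i) $3(M+1)^2(9M+1)\Delta_{2,n}<\alpha$, and (ii) $12\tau^2-12(M-p_0+1)\eta_n^2-4\eta_n^2-4\eta_n(C_{4n}+C_{3n})-\Delta_{p_0,n}V_{1n}-\Delta_{p_0+M-1,n}V_{2n}-\rho_{1n}-\rho_{2n}>D$,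 where $\rho_{1n},\rho_{2n}$ are computed with this $\alpha$.
   Context: Setting. $n=1,2,\ldots$ indexes a sequence of problems. For each $n$ we are given integers $p=p_n$, $p_0=p_{0,n}$, $M=M_n$ with $1\le p_0\le M$ and $p_0<p$; a continuous function $f_n:[0,1]^p\to\mathbb{R}$; design points $\mathbf{x}_i=(x_{i1},\ldots,x_{ip})'\in[0,1)^p$, $i=1,\ldots,n$; a function $\widetilde f_n\in C[0,1]^{p_0}$; a number $\eta_n>0$; and a positive constant $\tau$. Let $\mathbf{X}$ be the $n\times p$ matrix with rows $\mathbf{x}_i'$. Let $Z_d=\{1,\ldots,d\}$, $\mathcal{A}_0=Z_{p_0}$. For $\mathcal{A}\subset Z_p$, $\mathbf{x}_{\mathcal{A}}$ is the subvector of $\mathbf{x}\in[0,1]^p$ with coordinates in $\mathcal{A}$ and $\mathbf{X}_{\mathcal{A}}$ the submatrix of $\mathbf{X}$ with columns in $\mathcal{A}$. $a_n=O(n^{\gamma})$ means $|a_n|\le cn^{\gamma}$ for some constant $c$ and all large $n$. Subset best linear approximation: for $\mathcal{A}\subset Z_p$, $(\beta_0(\mathcal{A}),\boldsymbol{\beta}(\mathcal{A})')'\in\mathbb{R}\times\mathbb{R}^{|\mathcal{A}|}$ minimizes $\int_{[0,1]^p}[f_n(\mathbf{x})-\phi_0-\boldsymbol{\phi}'\mathbf{x}_{\mathcal{A}}]^2d\mathbf{x}$ over $(\phi_0,\boldsymbol\phi)$; $\boldsymbol{\beta}_{Z_p}(\mathcal{A})\in\mathbb{R}^p$ has coordinates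 indexed by $\mathcal{A}$ equal to $\boldsymbol\beta(\mathcal{A})$ and all others $0$. Hardy–Krause variation: for $g:[0,1]^d\to\mathbb{R}$ and an axis-parallel rectangle $J$, $\Delta_J(g)$ is the sum of values of $g$ at the $2^d$ vertices of $J$ with alternating signs at nearest-neighbour vertices; $V^{Vit}(g)=\sup_\Pi\sum_{J\in\Pi}|\Delta_J(g)|$ over partitions $\Pi$ of $[0,1]^d$ into finitely many non-overlapping axis-parallel sub-rectangles; $V_{HK}(g)=\sum_{\emptyset\ne u\subset Z_d}V^{Vit}(g_u)$ where $g_u$ is $g$ with $x_k=1$ for $k\notin u$, as a function of $\mathbf{x}_u$. Functions depending on some coordinates of $\mathbf{x}\in[0,1]^p$ are regarded as functions on $[0,1]^p$. Discrepancy: for an $m\times d$ matrix $\mathbf{A}$ with rows $\mathbf{a}_i'\in[0,1]^d$, $\delta_{d,m}(\mathbf{A})=\sup_{\mathbf{x}\in[0,1]^d}|F_m(\mathbf{x})-\prod_{k=1}^dx_k|$, $F_m(\mathbf{x})=\frac1m\#\{i:a_{ik}\le x_k\ \forall k\}$. Sets: $\mathcal{U}_1=\{\mathcal{A}\subset Z_p:|\mathcal{A}|=M,\mathcal{A}_0\setminus\mathcal{A}\neq\emptyset\}$; $\mathcal{U}_2=\{\mathcal{A}\subset Z_p:|\mathcal{A}|=2\}$; $\mathcal{U}_3=\{\mathcal{A}_0\cup I_1:I_1\subset Z_p\setminus\mathcal{A}_0,|I_1|=1\}$; $\mathcal{U}_4=\{\mathcal{A}_0\cup I_2:I_2\subset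 Z_p\setminus\mathcal{A}_0,|I_2|=M-1\}$. $\Delta_{p_0,n}=\delta_{p_0,n}(\mathbf{X}_{\mathcal{A}_0})$, $\Delta_{2,n}=\max_{\mathcal{A}\in\mathcal{U}_2}\delta_{2,n}(\mathbf{X}_{\mathcal{A}})$, $\Delta_{p_0+1,n}=\max_{\mathcal{A}\in\mathcal{U}_3}\delta_{p_0+1,n}(\mathbf{X}_{\mathcal{A}})$, $\Delta_{p_0+M-1,n}=\max_{\mathcal{A}\in\mathcal{U}_4}\delta_{p_0+M-1,n}(\mathbf{X}_{\mathcal{A}})$. Constants: $C_{1n}=\max_{j=1,\ldots,p}\max(V_{HK}(\widetilde f_n),V_{HK}(x_j\widetilde f_n))$; $C_{2n}=\max_{\mathbf{x}\in[0,1]^p}|f_n(\mathbf{x})|$; $C_{3n}=\max_{\mathbf{x}\in[0,1]^p}|\widetilde f_n(\mathbf{x}_{\mathcal{A}_0})-\mathbf{x}'\boldsymbol\beta_{Z_p}(\mathcal{A}_0)-\beta_0(\mathcal{A}_0)|$; $C_{4n}=\max_{\mathcal{A}\in\mathcal{U}_1}\max_{\mathbf{x}\in[0,1]^p}|\widetilde f_n(\mathbf{x}_{\mathcal{A}_0})-\mathbf{x}'\boldsymbol\beta_{Z_p}(\mathcal{A})-\beta_0(\mathcal{A})|$; $V_{1n}=V_{HK}(\widetilde f_n(\mathbf{x}_{\mathcal{A}_0})-\beta_0(\mathcal{A}_0)-\mathbf{x}'\boldsymbol\beta_{Z_p}(\mathcal{A}_0))$; $V_{2n}=\max_{\mathcal{A}\in\mathcal{U}_1}V_{HK}(\widetilde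 f_n(\mathbf{x}_{\mathcal{A}_0})-\beta_0(\mathcal{A})-\mathbf{x}'\boldsymbol\beta_{Z_p}(\mathcal{A}))$. For $\alpha\in(0,1)$: $\zeta_{1n}=C_{1n}(p_0+1)^2(9p_0+1)\Delta_{p_0,n}+2(p_0+1)^2(9p_0+1)\eta_n+\frac{3}{1-\alpha}C_{2n}(p_0+1)^4(9p_0+1)^2\Delta_{2,n}$; $\zeta_{2n}=C_{1n}(M+1)^2(9M+1)\Delta_{p_0+1,n}+2(M+1)^2(9M+1)\eta_n+\frac{3}{1-\alpha}C_{2n}(M+1)^4(9M+1)^2\Delta_{2,n}$; $\rho_{1n}=\zeta_{1n}^2+2(C_{3n}+\eta_n)\zeta_{1n}+2(p_0+1)^{-1/2}\zeta_{1n}^2$; $\rho_{2n}=\zeta_{2n}^2+2(C_{4n}+\eta_n)\zeta_{2n}+2(M+1)^{-1/2}\zeta_{2n}^2$. *)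

(* Defs.v *)
From Stdlib Require Import Reals ClassicalEpsilon.
From Coquelicot Require Import Coquelicot.
From mathcomp Require Import all_boot.
Set Implicit Arguments. Unset Strict Implicit. Unset Printing Implicit Defensive.
Local Open Scope R_scope.

(** Points of [0,1]^d are functions 'I_d -> R; coordinate k of Z_d = {1..d}
    is the ordinal k-1. *)
Definition in_cube (d : nat) (x : 'I_d -> R) : Prop := forall k, 0 <= x k <= 1.

Definition cont_cube (d : nat) (g : ('I_d -> R) -> R) : Prop :=
  forall x, in_cube x -> forall eps, 0 < eps -> exists delta, 0 < delta /\
    forall y, in_cube y -> (forall k, Rabs (y k - x k) < delta) ->
      Rabs (g y - g x) < eps.

Definition depends_only (d : nat) (A : {set 'I_d}) (g : ('I_d -> R) -> R) : Prop :=
  forall x y, (forall k, k \in A -> x k = y k) -> g x = g y.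

Definition leRb (a b : R) : bool := if Rle_dec a b then true else false.

(** Integral over [0,1]^d (iterated Riemann integral; equals the Lebesgue
    integral for the continuous integrands used below). *)
Definition cons_pt (d : nat) (t : R) (x : 'I_d -> R) : 'I_d.+1 -> R :=
  fun i => match unlift ord0 i with Some j => x j | None => t end.

Fixpoint cube_int (d : nat) : (('I_d -> R) -> R) -> R :=
  match d return (('I_d -> R) -> R) -> R with
  | 0 => fun g => g (fun _ => 0)
  | d'.+1 => fun g => RInt (fun t => cube_int (fun x => g (cons_pt t x))) 0 1
  end.

Definition lin (d : nat) (phi x : 'I_d -> R) : R := \big[Rplus/0]_(k < d) (phi k * x k).

(** Subset best linear approximation.  A coefficient vector is represented
    directly as beta_{Z_p}(A) : 'I_p -> R, vanishing outside A. *)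
Definition blp_loss (p : nat) (f : ('I_p -> R) -> R) (c0 : R) (c : 'I_p -> R) : R :=
  cube_int (fun x => (f x - c0 - lin c x) ^ 2).

Definition supported (p : nat) (A : {set 'I_p}) (c : 'I_p -> R) : Prop :=
  forall k, k \notin A -> c k = 0.

Definition is_blp (p : nat) (f : ('I_p -> R) -> R) (A : {set 'I_p})
  (b : R * ('I_p -> R)) : Prop :=
  supported A b.2 /\
  forall c0 c, supported A c -> blp_loss f b.1 b.2 <= blp_loss f c0 c.

Definition blp (p : nat) (f : ('I_p -> R) -> R) (A : {set 'I_p}) : R * ('I_p -> R) :=
  epsilon (inhabits (0, fun _ => 0)) (is_blp f A).

Definition beta0 p f A : R := (@blp p f A).1.
Definition betaZ p f A : 'I_p -> R := (@blp p f A).2.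

(** For u a set of coordinates, a rectangle of the
    face {x : x_k = 1 for k notin u} is a pair (a,b) with 0<=a_k<=b_k<=1 for
    k in u and a_k=b_k=1 for k notin u; this identifies [0,1]^|u| with that
    face, so that g restricted to it is g_u. *)
Definition face_rect (d : nat) (u : {set 'I_d}) (J : ('I_d -> R) * ('I_d -> R)) : Prop :=
  forall k, (k \in u -> 0 <= J.1 k /\ J.1 k <= J.2 k /\ J.2 k <= 1) /\
            (k \notin u -> J.1 k = 1 /\ J.2 k = 1).

Definition face_partition (d : nat) (u : {set 'I_d})
  (P : seq (('I_d -> R) * ('I_d -> R))) : Prop :=
  (forall J, List.In J P -> face_rect u J) /\
  (forall x : 'I_d -> R, (forall k, k \in u -> 0 <= x k <= 1) ->
     exists J, List.In J P /\ forall k, k \in u -> J.1 k <= x k <= J.2 k) /\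
  (forall i j, (i < size P)%nat -> (j < size P)%nat -> i <> j ->
     ~ exists x : 'I_d -> R, forall k, k \in u ->
        (nth (fun _ => 0, fun _ => 0) P i).1 k < x k < (nth (fun _ => 0, fun _ => 0) P i).2 k /\
        (nth (fun _ => 0, fun _ => 0) P j).1 k < x k < (nth (fun _ => 0, fun _ => 0) P j).2 k).

Definition rect_delta (d : nat) (u : {set 'I_d}) (J : ('I_d -> R) * ('I_d -> R))
  (g : ('I_d -> R) -> R) : R :=
  \big[Rplus/0]_(v in powerset u)
     (pow (-1) #|v| * g (fun k => if k \in v then J.1 k else J.2 k)).

Definition vitali_face (d : nat) (u : {set 'I_d}) (g : ('I_d -> R) -> R) : Rbar :=
  Lub_Rbar (fun r => exists P, face_partition u P /\
     r = \big[Rplus/0]_(J <- P) Rabs (rect_delta u J g)).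

Definition Rbar0 : Rbar := Rbar.Finite 0.
Definition V_HK (d : nat) (g : ('I_d -> R) -> R) : Rbar :=
  \big[Rbar_plus/Rbar0]_(u : {set 'I_d} | u != set0) vitali_face u g.

Definition discrepancy (n p : nat) (X : 'I_n -> 'I_p -> R) (A : {set 'I_p}) : R :=
  real (Lub_Rbar (fun r => exists x : 'I_p -> R, in_cube x /\
     r = Rabs (INR #|[set i : 'I_n | [forall k in A, leRb (X i k) (x k)]]| / INR n
               - \big[Rmult/1]_(k in A) x k))).

Definition Rbar_maxr (x y : Rbar) : Rbar :=
  if Rbar_le_dec x y then y else x.

Definition sup_cube (d : nat) (g : ('I_d -> R) -> R) : R :=
  real (Lub_Rbar (fun r => exists x, @in_cube d x /\ r = g x)).

Definition A0 (p p0 : nat) : {set 'I_p} := [set k : 'I_p | (k < p0)%nat].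

Definition U1 (p p0 M : nat) : pred {set 'I_p} :=
  fun A => (#|A| == M)%nat && ~~ (A0 p p0 \subset A).
Definition U2 (p : nat) : pred {set 'I_p} := fun A => #|A| == 2%nat.
Definition U3 (p p0 : nat) : pred {set 'I_p} :=
  fun A => (A0 p p0 \subset A) && (#|A| == p0.+1)%nat.
Definition U4 (p p0 M : nat) : pred {set 'I_p} :=
  fun A => (A0 p p0 \subset A) && (#|A| == (p0 + M - 1)%nat).

Definition bigO (a : nat -> R) (g : R) : Prop :=
  exists c N, forall n, (N <= n)%nat -> Rabs (a n) <= c * Rpower (INR n) g.
Definition bigO_Rbar (a : nat -> Rbar) (g : R) : Prop :=
  exists c N, forall n, (N <= n)%nat -> Rbar_le (Rbar_abs (a n)) (Rbar.Finite (c * Rpower (INR n) g)).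

Section Quantities.
Variables (n p p0 M : nat) (f ft : ('I_p -> R) -> R) (X : 'I_n -> 'I_p -> R) (eta : R).

Definition Delta_p0 : R := discrepancy X (A0 p p0).
Definition Delta_2 : R := \big[Rmax/0]_(A : {set 'I_p} | U2 A) discrepancy X A.
Definition Delta_p0_1 : R := \big[Rmax/0]_(A : {set 'I_p} | U3 p0 A) discrepancy X A.
Definition Delta_p0_M_1 : R := \big[Rmax/0]_(A : {set 'I_p} | U4 p0 M A) discrepancy X A.

Definition resid (A : {set 'I_p}) : ('I_p -> R) -> R :=
  fun x => ft x - lin (betaZ f A) x - beta0 f A.

Definition C1n : Rbar :=
  \big[Rbar_maxr/Rbar0]_(j : 'I_p)
     Rbar_maxr (V_HK ft) (V_HK (fun x => x j * ft x)).
Definition C2n : R := sup_cube (fun x => Rabs (f x)).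
Definition C3n : R := sup_cube (fun x => Rabs (resid (A0 p p0) x)).
Definition C4n : R :=
  \big[Rmax/0]_(A : {set 'I_p} | U1 p0 M A) sup_cube (fun x => Rabs (resid A x)).
Definition V1n : Rbar := V_HK (resid (A0 p p0)).
Definition V2n : Rbar := \big[Rbar_maxr/Rbar0]_(A : {set 'I_p} | U1 p0 M A) V_HK (resid A).

Variable alpha : R.
Definition zeta1 : R :=
  real C1n * INR (p0 + 1) ^ 2 * INR (9 * p0 + 1) * Delta_p0
  + 2 * INR (p0 + 1) ^ 2 * INR (9 * p0 + 1) * eta
  + 3 / (1 - alpha) * C2n * INR (p0 + 1) ^ 4 * INR (9 * p0 + 1) ^ 2 * Delta_2.
Definition zeta2 : R :=
  real C1n * INR (M + 1) ^ 2 * INR (9 * M + 1) * Delta_p0_1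
  + 2 * INR (M + 1) ^ 2 * INR (9 * M + 1) * eta
  + 3 / (1 - alpha) * C2n * INR (M + 1) ^ 4 * INR (9 * M + 1) ^ 2 * Delta_2.
Definition rho1 : R :=
  zeta1 ^ 2 + 2 * (C3n + eta) * zeta1 + 2 / sqrt (INR (p0 + 1)) * zeta1 ^ 2.
Definition rho2 : R :=
  zeta2 ^ 2 + 2 * (C4n + eta) * zeta2 + 2 / sqrt (INR (M + 1)) * zeta2 ^ 2.
End Quantities.

(* Main.v *)
Require Import Defs.
From Stdlib Require Import Reals Lra Lia.
From Coquelicot Require Import Coquelicot.
From mathcomp Require Import all_boot zify.
Set Implicit Arguments. Unset Strict Implicit.
Local Open Scope R_scope.

Lemma Rpower_pos' x g : 0 < Rpower x g.
Proof. unfold Rpower. apply exp_pos. Qed.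

Lemma bigO_c_nonneg a g c N : (forall n, (N <= n)%nat -> Rabs (a n) <= c * Rpower (INR n) g) -> 0 <= c.
Proof.
  intros H. specialize (H N (leqnn N)). pose proof (Rabs_pos (a N)).
  pose proof (Rpower_pos' (INR N) g).
  destruct (Rle_or_lt 0 c); auto. nra.
Qed.

Lemma bigO_mul a b g h : bigO a g -> bigO b h -> bigO (fun n => a n * b n) (g + h).
Proof.
  intros [c1 [N1 H1]] [c2 [N2 H2]]. exists (c1 * c2), (maxn N1 N2). intros n Hn.
  rewrite Rabs_mult Rpower_plus.
  have Ha := H1 n ltac:(lia). have Hb := H2 n ltac:(lia).
  replace (c1 * c2 * (Rpower (INR n) g * Rpower (INR n) h)) with
    ((c1 * Rpower (INR n) g) * (c2 * Rpower (INR n) h)) by ring.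
  apply Rmult_le_compat; auto using Rabs_pos.
Qed.

Lemma bigO_const k : bigO (fun _ => k) 0.
Proof.
  exists (Rabs k), 0%nat. intros n _. unfold Rpower. rewrite Rmult_0_l exp_0. lra.
Qed.

Lemma bigO_eqexp a g h : g = h -> bigO a g -> bigO a h.
Proof. intros ->; auto. Qed.

Lemma bigO_pow a g k : bigO a g -> bigO (fun n => a n ^ k) (INR k * g).
Proof.
  intros H. induction k.
  - simpl. apply bigO_eqexp with (g:=0). ring. apply bigO_const.
  - apply bigO_eqexp with (g := g + INR k * g). rewrite S_INR; ring.
    simpl. apply (bigO_mul H IHk).
Qed.

Lemma bigO_le a b k g N0 : 0 <= k -> (forall n, (N0 <= n)%nat -> Rabs (a n) <= k * Rabs (b n)) ->
  bigO b g -> bigO a g.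
Proof.
  intros Hk Hab [c [N H]]. exists (k * c), (maxn N0 N). intros n Hn.
  eapply Rle_trans. apply Hab; lia. rewrite Rmult_assoc. apply Rmult_le_compat_l; auto.
  apply H; lia.
Qed.

Lemma bigO_Rbar_real a g : bigO_Rbar a g -> bigO (fun n => real (a n)) g.
Proof.
  intros [c [N H]]. exists c, N. intros n Hn. specialize (H n Hn).
  destruct (a n); simpl in *; easy.
Qed.

Definition Small (a : nat -> R) := forall eps, 0 < eps -> exists N, forall n, (N <= n)%nat -> Rabs (a n) < eps.

Lemma bigO_Small a g : g < 0 -> bigO a g -> Small a.
Proof.
  intros Hg [c [N H]] eps Heps.
  have Hc := bigO_c_nonneg H.
  set e' := eps / (c + 1).
  have He' : 0 < e' by (unfold e'; apply Rdiv_lt_0_compat; lra).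
  destruct (INR_unbounded (exp (ln e' / g))) as [N1 HN1].
  exists (maxn N (maxn N1 1)). intros n Hn.
  have Hn1 : INR N1 <= INR n by (apply le_INR; lia).
  have Hpos : 0 < exp (ln e' / g) by apply exp_pos.
  have Hl : ln (exp (ln e' / g)) < ln (INR n) by (apply ln_increasing; lra).
  rewrite ln_exp in Hl.
  have Hl2 : g * ln (INR n) < ln e'.
  { have : ln e' = g * (ln e' / g) by field; lra. nra. }
  have Hp : Rpower (INR n) g < e'.
  { unfold Rpower. rewrite <- (exp_ln e') by lra. apply exp_increasing. lra. }
  eapply Rle_lt_trans. apply H; lia.
  have : c * Rpower (INR n) g <= c * e' by (apply Rmult_le_compat_l; lra).
  have : c * e' < eps.
  { unfold e'. replace (c * (eps / (c + 1))) with (eps * (c / (c+1))) by (field; lra).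
    have : c / (c+1) < 1. { apply (Rmult_lt_reg_r (c+1)). lra. field_simplify; lra. }
    nra. }
  lra.
Qed.

Lemma Small_add a b : Small a -> Small b -> Small (fun n => a n + b n).
Proof.
  intros Ha Hb eps He. destruct (Ha (eps/2)) as [N1 H1]; [lra|].
  destruct (Hb (eps/2)) as [N2 H2]; [lra|]. exists (maxn N1 N2). intros n Hn.
  eapply Rle_lt_trans. apply Rabs_triang.
  have := H1 n ltac:(lia). have := H2 n ltac:(lia). lra.
Qed.

Lemma Small_ext a b : (forall n, a n = b n) -> Small a -> Small b.
Proof. intros E H eps He. destruct (H eps He) as [N HN]. exists N. intros n Hn. rewrite <- E. auto. Qed.

Lemma Small_mulb a b K N0 : Small a -> (forall n, (N0 <= n)%nat -> Rabs (b n) <= K) ->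
  Small (fun n => b n * a n).
Proof.
  intros Ha Hb eps He.
  destruct (Ha (eps / (Rabs K + 1))) as [N1 H1]. apply Rdiv_lt_0_compat; [lra|]. pose proof (Rabs_pos K); lra.
  exists (maxn N0 N1). intros n Hn. rewrite Rabs_mult.
  have h1 := H1 n ltac:(lia). have h2 := Hb n ltac:(lia).
  have hK : K <= Rabs K by apply Rle_abs.
  pose proof (Rabs_pos (a n)). pose proof (Rabs_pos (b n)).
  have : Rabs (b n) * Rabs (a n) <= (Rabs K + 1) * Rabs (a n) by nra.
  have : (Rabs K + 1) * Rabs (a n) < eps.
  { apply (Rmult_lt_compat_l (Rabs K + 1)) in h1; [|lra].
    replace ((Rabs K + 1) * (eps / (Rabs K + 1))) with eps in h1 by (field; lra). lra. }
  lra.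
Qed.

Lemma Small_bnd a : Small a -> exists N, forall n, (N <= n)%nat -> Rabs (a n) <= 1.
Proof. intros H. destruct (H 1 Rlt_0_1) as [N HN]. exists N. intros n Hn. left; auto. Qed.

Lemma Small_mul a b : Small a -> Small b -> Small (fun n => a n * b n).
Proof. intros Ha Hb. destruct (Small_bnd Ha) as [N HN]. exact (Small_mulb Hb HN). Qed.

Lemma Small_scal k a : Small a -> Small (fun n => k * a n).
Proof. intros Ha. apply (@Small_mulb a (fun _ => k) (Rabs k) 0); auto. intros; lra. Qed.

Lemma INR_le_mul k c a : (1 <= a)%nat -> (k <= c * a)%nat -> Rabs (INR k) <= INR c * Rabs (INR a).
Proof.
  intros _ H. rewrite !Rabs_right; try (apply Rle_ge, pos_INR).
  rewrite <- mult_INR. apply le_INR. lia.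
Qed.

Lemma bigO_Small' a g : bigO a g -> g < 0 -> Small a.
Proof. intros; eapply bigO_Small; eauto. Qed.

Lemma two_sqrt_bnd x : 1 <= x -> Rabs (2 / sqrt x) <= 2.
Proof.
  intros Hx. have Hs : 1 <= sqrt x by (rewrite <- sqrt_1; apply sqrt_le_1_alt; lra).
  have Hi : / sqrt x <= 1 by (rewrite <- Rinv_1; apply Rinv_le_contravar; lra).
  have Hp : 0 < / sqrt x by (apply Rinv_0_lt_compat; lra).
  rewrite Rabs_right; unfold Rdiv; nra.
Qed.

Ltac bo := first [ eassumption | apply bigO_const | apply bigO_pow; bo | apply bigO_mul; bo ].

Unset Implicit Arguments. Set Strict Implicit.
Theorem theorem3
  (p p0 M : nat -> nat)
  (f : forall n, ('I_(p n) -> R) -> R)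
  (X : forall n, 'I_n -> 'I_(p n) -> R)
  (ft : forall n, ('I_(p n) -> R) -> R)
  (eta : nat -> R) (tau : R)
  (g0 g1 g2 g3 g4 g5 g6 g7 g8 g9 : R)
  (Hdims : forall n, (1 <= p0 n)%nat /\ (p0 n <= M n)%nat /\ (p0 n < p n)%nat)
  (Hf : forall n, cont_cube (f n))
  (HX : forall n i k, 0 <= X n i k /\ X n i k < 1)
  (Hft : forall n, cont_cube (ft n) /\ depends_only (A0 (p n) (p0 n)) (ft n))
  (Heta : forall n, 0 < eta n)
  (Htau : 0 < tau)
  (HD2 : bigO (fun n => @Delta_2 n (p n) (X n)) (- g0))
  (HD3 : bigO (fun n => @Delta_p0_1 n (p n) (p0 n) (X n)) (- g0))
  (HD4 : bigO (fun n => @Delta_p0_M_1 n (p n) (p0 n) (M n) (X n)) (- g0))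
  (HD1 : bigO (fun n => @Delta_p0 n (p n) (p0 n) (X n)) (- g0))
  (Heta_O : bigO eta (- g1))
  (HV1 : bigO_Rbar (fun n => @V1n (p n) (p0 n) (f n) (ft n)) g2)
  (HV2 : bigO_Rbar (fun n => @V2n (p n) (p0 n) (M n) (f n) (ft n)) g3)
  (HC1 : bigO_Rbar (fun n => @C1n (p n) (ft n)) g4)
  (HC2 : bigO (fun n => @C2n (p n) (f n)) g5)
  (HC3 : bigO (fun n => @C3n (p n) (p0 n) (f n) (ft n)) g6)
  (HC4 : bigO (fun n => @C4n (p n) (p0 n) (M n) (f n) (ft n)) g7)
  (Hp0 : bigO (fun n => INR (p0 n)) g8)
  (HM : bigO (fun n => INR (M n)) g9)
  (Hg1 : 0 < g1) (Hg8 : 0 < g8) (Hg9 : 0 < g9)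
  (Hc1 : g8 < g9) (Hc2 : 3 * g9 < g0) (Hc3 : g9 < 2 * g1)
  (Hc4 : g7 < g1) (Hc5 : g6 < g1) (Hc6 : g2 < g0) (Hc7 : g3 < g0)
  (Hc8 : 3 * g9 + g4 < g0) (Hc9 : 3 * g9 < g1) (Hc10 : 6 * g9 + g5 < g0)
  (Hc11 : 3 * g8 + g4 + g6 < g0) (Hc12 : 3 * g8 + g6 < g1)
  (Hc13 : 6 * g8 + g5 + g6 < g0) (Hc14 : 3 * g9 + g4 + g7 < g0)
  (Hc15 : 3 * g9 + g7 < g1) (Hc16 : 6 * g9 + g5 + g7 < g0) :
  exists alpha, 0 < alpha < 1 /\ exists D, 0 < D /\ exists N, forall n, (N <= n)%nat ->
    3 * INR (M n + 1) ^ 2 * INR (9 * M n + 1) * @Delta_2 n (p n) (X n) < alpha /\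
    12 * tau ^ 2 - 12 * INR (M n - p0 n + 1) * eta n ^ 2 - 4 * eta n ^ 2
      - 4 * eta n * (@C4n (p n) (p0 n) (M n) (f n) (ft n) + @C3n (p n) (p0 n) (f n) (ft n))
      - @Delta_p0 n (p n) (p0 n) (X n) * real (@V1n (p n) (p0 n) (f n) (ft n))
      - @Delta_p0_M_1 n (p n) (p0 n) (M n) (X n) * real (@V2n (p n) (p0 n) (M n) (f n) (ft n))
      - @rho1 n (p n) (p0 n) (f n) (ft n) (X n) (eta n) alpha
      - @rho2 n (p n) (p0 n) (M n) (f n) (ft n) (X n) (eta n) alpha > D.
Proof.
  have HC1r := bigO_Rbar_real HC1.
  have HV1r := bigO_Rbar_real HV1.
  have HV2r := bigO_Rbar_real HV2.
  have HM1 : bigO (fun n => INR (M n + 1)) g9.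
  { apply (@bigO_le _ (fun n => INR (M n)) (INR 2) _ 0); [apply pos_INR| |exact HM].
    intros n _; have := Hdims n; intros [h1 [h2 h3]]; apply INR_le_mul; lia. }
  have HM9 : bigO (fun n => INR (9 * M n + 1)) g9.
  { apply (@bigO_le _ (fun n => INR (M n)) (INR 10) _ 0); [apply pos_INR| |exact HM].
    intros n _; have := Hdims n; intros [h1 [h2 h3]]; apply INR_le_mul; lia. }
  have HMp : bigO (fun n => INR (M n - p0 n + 1)) g9.
  { apply (@bigO_le _ (fun n => INR (M n)) (INR 1) _ 0); [apply pos_INR| |exact HM].
    intros n _; have := Hdims n; intros [h1 [h2 h3]]; apply INR_le_mul; lia. }
  have HP1 : bigO (fun n => INR (p0 n + 1)) g8.
  { apply (@bigO_le _ (fun n => INR (p0 n)) (INR 2) _ 0); [apply pos_INR| |exact Hp0].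
    intros n _; have := Hdims n; intros [h1 [h2 h3]]; apply INR_le_mul; lia. }
  have HP9 : bigO (fun n => INR (9 * p0 n + 1)) g8.
  { apply (@bigO_le _ (fun n => INR (p0 n)) (INR 10) _ 0); [apply pos_INR| |exact Hp0].
    intros n _; have := Hdims n; intros [h1 [h2 h3]]; apply INR_le_mul; lia. }
  have Seta : Small eta by (eapply bigO_Small'; [exact Heta_O | lra]).
  exists (1/2). split; [lra|]. exists (6 * tau ^ 2). split; [nra|].
  have S0 : Small (fun n => 3 * INR (M n + 1) ^ 2 * INR (9 * M n + 1) * @Delta_2 n (p n) (X n)).
  { eapply bigO_Small'; [bo | simpl; lra]. }
  pose za := fun n => real (@C1n (p n) (ft n)) * INR (p0 n + 1) ^ 2 * INR (9 * p0 n + 1) * @Delta_p0 n (p n) (p0 n) (X n).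
  pose zb := fun n => 2 * INR (p0 n + 1) ^ 2 * INR (9 * p0 n + 1) * eta n.
  pose zc := fun n => 3 / (1 - 1/2) * @C2n (p n) (f n) * INR (p0 n + 1) ^ 4 * INR (9 * p0 n + 1) ^ 2 * @Delta_2 n (p n) (X n).
  have Bza : bigO za (g4 + INR 2 * g8 + g8 + - g0) by (unfold za; bo).
  have Bzb : bigO zb (0 + INR 2 * g8 + g8 + - g1) by (unfold zb; bo).
  have Bzc : bigO zc (0 + g5 + INR 4 * g8 + INR 2 * g8 + - g0) by (unfold zc; bo).
  pose z := fun n => za n + zb n + zc n.
  have Sz : Small z.
  { apply Small_add; [apply Small_add|]; (eapply bigO_Small'; [eassumption | simpl; lra]). }
  have R1 : Small (fun n => @rho1 n (p n) (p0 n) (f n) (ft n) (X n) (eta n) (1/2)).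
  { apply (@Small_ext (fun n => z n * z n + 2 * (@C3n (p n) (p0 n) (f n) (ft n) * za n
        + @C3n (p n) (p0 n) (f n) (ft n) * zb n + @C3n (p n) (p0 n) (f n) (ft n) * zc n)
        + 2 * (eta n * z n) + 2 / sqrt (INR (p0 n + 1)) * (z n * z n))).
    { intros n. unfold rho1, zeta1, z, za, zb, zc. ring. }
    apply Small_add; [apply Small_add; [apply Small_add|]|].
    - apply Small_mul; auto.
    - apply Small_scal. apply Small_add; [apply Small_add|];
      (eapply bigO_Small'; [apply bigO_mul; eassumption | simpl; lra]).
    - apply Small_scal, Small_mul; auto.
    - apply (@Small_mulb _ _ 2 0). apply Small_mul; auto.
      intros n _. apply two_sqrt_bnd. apply (le_INR 1). have := Hdims n. lia. }
  clear za zb zc z Bza Bzb Bzc Sz.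
  pose za := fun n => real (@C1n (p n) (ft n)) * INR (M n + 1) ^ 2 * INR (9 * M n + 1) * @Delta_p0_1 n (p n) (p0 n) (X n).
  pose zb := fun n => 2 * INR (M n + 1) ^ 2 * INR (9 * M n + 1) * eta n.
  pose zc := fun n => 3 / (1 - 1/2) * @C2n (p n) (f n) * INR (M n + 1) ^ 4 * INR (9 * M n + 1) ^ 2 * @Delta_2 n (p n) (X n).
  have Bza : bigO za (g4 + INR 2 * g9 + g9 + - g0) by (unfold za; bo).
  have Bzb : bigO zb (0 + INR 2 * g9 + g9 + - g1) by (unfold zb; bo).
  have Bzc : bigO zc (0 + g5 + INR 4 * g9 + INR 2 * g9 + - g0) by (unfold zc; bo).
  pose z := fun n => za n + zb n + zc n.
  have Sz : Small z.
  { apply Small_add; [apply Small_add|]; (eapply bigO_Small'; [eassumption | simpl; lra]). }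
  have R2 : Small (fun n => @rho2 n (p n) (p0 n) (M n) (f n) (ft n) (X n) (eta n) (1/2)).
  { apply (@Small_ext (fun n => z n * z n + 2 * (@C4n (p n) (p0 n) (M n) (f n) (ft n) * za n
        + @C4n (p n) (p0 n) (M n) (f n) (ft n) * zb n + @C4n (p n) (p0 n) (M n) (f n) (ft n) * zc n)
        + 2 * (eta n * z n) + 2 / sqrt (INR (M n + 1)) * (z n * z n))).
    { intros n. unfold rho2, zeta2, z, za, zb, zc. ring. }
    apply Small_add; [apply Small_add; [apply Small_add|]|].
    - apply Small_mul; auto.
    - apply Small_scal. apply Small_add; [apply Small_add|];
      (eapply bigO_Small'; [apply bigO_mul; eassumption | simpl; lra]).
    - apply Small_scal, Small_mul; auto.
    - apply (@Small_mulb _ _ 2 0). apply Small_mul; auto.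
      intros n _. apply two_sqrt_bnd. apply (le_INR 1). have := Hdims n. lia. }
  clear za zb zc z Bza Bzb Bzc Sz.
  have SA3 : Small (fun n => 4 * eta n * (@C4n (p n) (p0 n) (M n) (f n) (ft n) + @C3n (p n) (p0 n) (f n) (ft n))).
  { apply (@Small_ext (fun n => 4 * eta n * @C4n (p n) (p0 n) (M n) (f n) (ft n) + 4 * eta n * @C3n (p n) (p0 n) (f n) (ft n))).
    { intros n; ring. }
    apply Small_add; (eapply bigO_Small'; [bo | simpl; lra]). }
  have ST : Small (fun n =>
      12 * INR (M n - p0 n + 1) * eta n ^ 2 + 4 * eta n ^ 2
      + 4 * eta n * (@C4n (p n) (p0 n) (M n) (f n) (ft n) + @C3n (p n) (p0 n) (f n) (ft n))
      + @Delta_p0 n (p n) (p0 n) (X n) * real (@V1n (p n) (p0 n) (f n) (ft n))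
      + @Delta_p0_M_1 n (p n) (p0 n) (M n) (X n) * real (@V2n (p n) (p0 n) (M n) (f n) (ft n))
      + @rho1 n (p n) (p0 n) (f n) (ft n) (X n) (eta n) (1/2)
      + @rho2 n (p n) (p0 n) (M n) (f n) (ft n) (X n) (eta n) (1/2)).
  { apply Small_add; [|exact R2]. apply Small_add; [|exact R1].
    apply Small_add; [|eapply bigO_Small'; [bo | simpl; lra]].
    apply Small_add; [|eapply bigO_Small'; [bo | simpl; lra]].
    apply Small_add; [|exact SA3].
    apply Small_add; (eapply bigO_Small'; [bo | simpl; lra]). }
  destruct (S0 (1/2) ltac:(lra)) as [N1 H1].
  destruct (ST (6 * tau ^ 2) ltac:(nra)) as [N2 H2].
  exists (maxn N1 N2). intros n Hn.
  have h1 := H1 n ltac:(lia). have h2 := H2 n ltac:(lia).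
  apply Rabs_def2 in h1. apply Rabs_def2 in h2. split; lra.
Qed.
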